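(* Let $\nu,\bar\nu\in\mathcal N$ with $\bar\nu\ge\nu$ (i.e. $\bar\nu(I)\ge\nu(I)$ for all measurable $I\subseteq\mathbb R$), and define $M^t_\nu$ and $M^t_{\bar\nu}$ using the same weighted Poisson process. Then $M^t_{\bar\nu}\ge M^t_\nu$ as measures for all $t\ge0$. If moreover $\bar\nu$ and $\nu$ coincide on $(-\infty,0)$, then for every $x\ge0$ the quantity $M^t_{\bar\nu}([0,x])-M^t_\nu([0,x])$ is non-increasing in $t$.
   Context: Let $\mathbf P\subset\mathbb R^2$ be a homogeneous Poisson process of intensity one with i.i.d. positive weights of distribution $F$, independent of $\mathbf P$, where $\int_0^\infty e^{ax}dF(x)<\infty$ for some $a>0$. $L(\mathbf p,\mathbf q)$ is the maximal total weight of a coordinatewise increasing finite sequence of points of $\mathbf P$ in $\{\mathbf x:p_1<x_1\le q_1,\ p_2<x_2\le q_2\}$. For a positive locally finite measure $\nu$ on $\mathbb R$, $\nu(x)=\nu((0,x])$ for $x\ge0$ and $\nu(x)=-\nu((x,0])$ for $x<0$; $\mathcal N$ is the set of such $\nu$ with $\liminf_{y\to-\infty}\nu(y)/y>0$. For $\nu\in\mathcal N$ and $t\ge0$, $L_\nu(x,t)=\sup_{z\le x}\{\nu(z)+L((z,0),(x,t))\}$ and $M^t_\nu((x,y])=L_\nu(y,t)-L_\nu(x,t)$ for $x\le y$ (the Hammersley interacting fluid system started from $\nu$). *)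

(* Defs.v *)
From HB Require Import structures.
From mathcomp Require Import all_boot all_order all_algebra.
From mathcomp Require Import all_classical all_reals all_analysis.
Set Implicit Arguments. Unset Strict Implicit. Unset Printing Implicit Defensive.
Import Order.TTheory GRing.Theory Num.Theory.
Local Open Scope classical_set_scope.
Local Open Scope ring_scope.

(* A marked point: ((x1, x2), w) = point (x1,x2) of R^2 carrying weight w. *)
Definition mpoint (R : realType) := ((R * R) * R)%type.

Definition poisson_mass (R : realType) (m : R) (k : nat) : R :=
  expR (- m) * m ^+ k / k`!%:R.

Definition has_card (T : eqType) (S : set T) (k : nat) : Prop :=
  exists s : seq T, uniq s /\ [set` s] = S /\ size s = k.

(* Intensity measure of the independently F-marked homogeneous Poisson process of
   intensity one on R^2: (Lebesgue x Lebesgue) x F on (R*R)*R. *)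
Definition intensity (R : realType) (F : probability R R) : set (mpoint R) -> \bar R :=
  ((@lebesgue_measure R \x @lebesgue_measure R) \x F)%E.

Definition poisson_process (R : realType) (d : measure_display) (Omega : measurableType d)
  (P : probability Omega R) (mu : set (mpoint R) -> \bar R)
  (Xi : Omega -> set (mpoint R)) : Prop :=
  forall (n : nat) (B : 'I_n -> set (mpoint R)) (k : 'I_n -> nat),
    (forall i, measurable (B i)) ->
    (forall i j, i != j -> B i `&` B j = set0) ->
    (forall i, (mu (B i) < +oo)%E) ->
    measurable [set w | forall i, has_card (Xi w `&` B i) (k i)] /\
    P [set w | forall i, has_card (Xi w `&` B i) (k i)] =
      (\prod_(i < n) poisson_mass (fine (mu (B i))) (k i))%:E.

Definition weight_law (R : realType) (F : probability R R) : Prop :=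
  F `]0, +oo[%classic = 1%E /\
  exists a : R, 0 < a /\ (\int[F]_x (expR (a * x))%:E < +oo)%E.

(* L(p,q): maximal total weight of a coordinatewise (strictly) increasing finite
   sequence of points of the configuration X in (p1,q1] x (p2,q2]. *)
Definition in_box (R : realType) (p q : R * R) (u : R * R) : Prop :=
  p.1 < u.1 <= q.1 /\ p.2 < u.2 <= q.2.

Definition incr (R : realType) (u v : mpoint R) : bool :=
  (u.1.1 < v.1.1) && (u.1.2 < v.1.2).

Definition LPP (R : realType) (X : set (mpoint R)) (p q : R * R) : \bar R :=
  ereal_sup [set (\sum_(u <- s) u.2)%:E |
               s in [set s : seq (mpoint R) |
                      sorted (@incr R) s /\ forall u, u \in s -> X u /\ in_box p q u.1]].

Definition nuF (R : realType) (nu : set R -> \bar R) (x : R) : \bar R :=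
  if 0 <= x then nu `]0, x]%classic else (- nu `]x, 0%R]%classic)%E.

(* nu is locally finite and liminf_{y -> -oo} nu(y)/y > 0 (equivalently: for some
   c > 0, nu(y)/y >= c for all sufficiently negative y, i.e. nu(y) <= c y). *)
Definition in_calN (R : realType) (nu : {measure set R -> \bar R}) : Prop :=
  (forall a b : R, (nu `[a, b]%classic < +oo)%E) /\
  exists c : R, 0 < c /\ (\forall y \near -oo, (nuF nu y <= (c * y)%:E)%E).

Definition Lnu (R : realType) (X : set (mpoint R)) (nu : set R -> \bar R) (x t : R) : \bar R :=
  ereal_sup [set (nuF nu z + LPP X (z, 0%R) (x, t))%E | z in [set z | z <= x]].

(* M^t_nu((x,y]) = L_nu(y,t) - L_nu(x,t). *)
Definition Mnu (R : realType) (X : set (mpoint R)) (nu : set R -> \bar R) (t x y : R) : \bar R :=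
  (Lnu X nu y t - Lnu X nu x t)%E.

(* M^t_nu([a,b]) = L_nu(b,t) - L_nu(a-,t), with L_nu(a-,t) = sup_{y<a} L_nu(y,t)
   the left limit of the nondecreasing function L_nu(.,t). *)
Definition Mnu_closed (R : realType) (X : set (mpoint R)) (nu : set R -> \bar R) (t a b : R) : \bar R :=
  (Lnu X nu b t - ereal_sup [set Lnu X nu y t | y in [set y : R | (y < a)%R]])%E.

(* Main.v *)
Require Import Defs.
From HB Require Import structures.
From mathcomp Require Import all_boot all_order all_algebra.
From mathcomp Require Import all_classical all_reals all_analysis.
Import Order.TTheory GRing.Theory Num.Theory.
Local Open Scope classical_set_scope.
Local Open Scope ring_scope.

From mathcomp Require Import lra.
Set Implicit Arguments. Unset Strict Implicit. Unset Printing Implicit Defensive.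


Section Comb.
Variable R : realType.
Notation P := (mpoint R).

Lemma incr_trans : transitive (@incr R).
Proof.
move=> v u w /andP[h1 h2] /andP[h3 h4]; apply/andP; split.
- exact: lt_trans h1 h3.
- exact: lt_trans h2 h4.
Qed.

Lemma chain_cmp (B : seq P) : pairwise (@incr R) B ->
  forall u v, u \in B -> v \in B -> [\/ u = v, incr u v | incr v u].
Proof.
elim: B => [//|b B IH]; rewrite pairwise_cons => /andP[/allP hb hB] u v.
rewrite !inE => /orP[/eqP->|uB] /orP[/eqP->|vB].
- by constructor 1.
- by constructor 2; apply: hb.
- by constructor 3; apply: hb.
- exact: IH.
Qed.

Lemma split_filter (B : seq P) (p : pred P) : pairwise (@incr R) B ->
  (forall u v, incr u v -> p v -> p u) ->
  B = seq.filter p B ++ seq.filter (predC p) B.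
Proof.
move=> + hp; elim: B => [//|b B IH]; rewrite pairwise_cons => /andP[/allP hb hB].
case pb: (p b) => /=.
- by rewrite /= {1}IH ?hB // pb.
- have hall : forall v, v \in B -> ~~ p v.
    by move=> v vB; apply/negP => pv; move: (hp _ _ (hb _ vB) pv); rewrite pb.
  have -> : seq.filter p B = [::].
    apply/eqP; rewrite -[_ == _]negbK -has_filter; apply/hasPn => v vB; exact: hall.
  have -> : seq.filter (predC p) B = B by apply/all_filterP/allP => v vB; exact: hall.
  by rewrite pb.
Qed.

Definition UL (A0 A B : seq P) : Prop :=
  exists b, b \in B /\ (exists a0, a0 \in A0 /\ b.1.1 <= a0.1.1) /\
            (exists a1, a1 \in A /\ a1.1.2 <= b.1.2).

Lemma cross_rec (Z X0 : R) (B : seq P) : Z <= X0 -> pairwise (@incr R) B ->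
  (forall b, b \in B -> Z < b.1.1 <= X0) ->
  forall A A0, pairwise (@incr R) (A0 ++ A) -> all (fun a : P => a.1.1 <= X0) A0 ->
   ~ UL A0 A B ->
   exists A1 A2 B1 B2, [/\ A = A1 ++ A2, B = B1 ++ B2,
     all (fun a : P => a.1.1 <= X0) A1, all (fun a : P => Z < a.1.1) A2 &
     allrel (@incr R) (A0 ++ A1) B2 /\ allrel (@incr R) B1 A2].
Proof.
move=> ZX hB hBb; elim=> [|a A IH] A0 hA hA0 hUL.
  exists [::], [::], B, [::]; split => //; last by rewrite allrel0r allrel0r.
  by rewrite cats0.
set B1 := seq.filter (fun b => incr b a) B.
set B2 := seq.filter (predC (fun b => incr b a)) B.
have hBs : B = B1 ++ B2.
  apply: split_filter => // u v uv va; exact: incr_trans uv va.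
have hA' : pairwise (@incr R) (a :: A) by move: hA; rewrite pairwise_cat => /and3P[].
have hA0a : allrel (@incr R) A0 (a :: A) by move: hA; rewrite pairwise_cat => /and3P[].
move: (hA') ; rewrite pairwise_cons => /andP[/allP haA hAA].
have LR : ~~ allrel (@incr R) A0 B2 ->
    exists b', b' \in B /\ a.1.1 <= b'.1.1 /\ b'.1.2 < a.1.2.
  move=> /allrelP hn.
  have [a0 [b' [a0A0 b'B2 nab]]] : exists a0 b', [/\ a0 \in A0, b' \in B2 & ~~ incr a0 b'].
    apply: contra_notP hn => hn a0 b' a0A0 b'B2; apply: contra_notT hn => hn2.
    by exists a0, b'.
  move: b'B2; rewrite mem_filter /= => /andP[nb'a b'B].
  have a0a : incr a0 a by move/allrelP: hA0a; apply => //; rewrite inE eqxx.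
  move: a0a nab nb'a; rewrite /incr => /andP[h1 h2].
  rewrite negb_and -!leNgt => /orP[k1|k1]; rewrite negb_and -!leNgt => /orP[k2|k2].
  - by move: (le_lt_trans k2 (le_lt_trans k1 h1)); rewrite ltxx.
  - exfalso; apply: hUL; exists b'; split => //; split.
      by exists a0.
    by exists a; rewrite inE eqxx.
  - by exists b'; split => //; split => //; exact: le_lt_trans k1 h2.
  - by move: (le_lt_trans k2 (le_lt_trans k1 h2)); rewrite ltxx.
have [[Za hall]|nsucc] := pselect (Z < a.1.1 /\ allrel (@incr R) A0 B2).
  exists [::], (a :: A), B1, B2; split => //.
  - rewrite /= Za /=; apply/allP => v vA; exact: lt_trans Za (andP (haA _ vA)).1.
  - split; first by rewrite cats0.
    apply/allrelP => b v; rewrite mem_filter /= => /andP[ba _].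
    rewrite inE => /orP[/eqP->//|vA]; exact: incr_trans ba (haA _ vA).
have aX : a.1.1 <= X0.
  rewrite leNgt; apply/negP => aX; apply: nsucc; split; first exact: le_lt_trans ZX aX.
  apply: contraT => /LR [b' [b'B [k _]]].
  by move: (hBb _ b'B) => /andP[_ hb]; move: (lt_le_trans aX (le_trans k hb)); rewrite ltxx.
have hUL' : ~ UL (A0 ++ [:: a]) A B.
  move=> [b [bB [[a0 [a0in ba0]] [a1 [a1A a1b]]]]].
  move: a0in; rewrite mem_cat => /orP[a0A0|].
    apply: hUL; exists b; split => //; split; first by exists a0.
    exists a; split; first by rewrite inE eqxx.
    exact: le_trans (ltW (andP (haA _ a1A)).2) a1b.
  rewrite inE => /eqP ea0; subst a0.
  have Za : Z < a.1.1 by exact: lt_le_trans (andP (hBb _ bB)).1 ba0.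
  have : ~~ allrel (@incr R) A0 B2 by apply/negP => hh; apply: nsucc.
  move=> /LR [b' [b'B [k1 k2]]].
  have hb'b : b'.1.2 < b.1.2.
    exact: lt_le_trans k2 (le_trans (ltW (andP (haA _ a1A)).2) a1b).
  case: (@chain_cmp B hB b b' bB b'B) => [ebb|/andP[_ hh]|/andP[hh _]].
  - by subst b'; rewrite ltxx in hb'b.
  - by move: (lt_trans hh hb'b); rewrite ltxx.
  - by move: (lt_le_trans hh (le_trans ba0 k1)); rewrite ltxx.
have hp1 : pairwise (@incr R) ((A0 ++ [:: a]) ++ A) by rewrite -catA.
have hp2 : all (fun a : P => a.1.1 <= X0) (A0 ++ [:: a]) by rewrite all_cat hA0 /= aX.
have [A1 [A2 [B1' [B2' [eA eB hA1 hA2 [hr1 hr2]]]]]] := IH (A0 ++ [:: a]) hp1 hp2 hUL'.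
exists (a :: A1), A2, B1', B2'; split => //.
- by rewrite eA.
- by rewrite /= aX.
- by split => //; rewrite -cat_rcons -cats1.
Qed.


Definition wsum (C : seq P) : R := \sum_(u <- C) u.2.
Definition okC (X : set P) (z x t : R) (C : seq P) : Prop :=
  sorted (@incr R) C /\ forall u, u \in C -> X u /\ in_box (z, 0) (x, t) u.1.

Lemma cross_box (X : set P) (z1 z2 x y t : R) (A B : seq P) :
  z1 <= z2 -> z2 <= x -> x <= y -> okC X z1 y t A -> okC X z2 x t B ->
  exists A' B', [/\ okC X z1 x t A', okC X z2 y t B' & wsum A' + wsum B' = wsum A + wsum B].
Proof.
move=> h12 h2x hxy [sA hA] [sB hB].
rewrite sorted_pairwise in sA; last exact: incr_trans.
rewrite sorted_pairwise in sB; last exact: incr_trans.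
have hBb : forall b, b \in B -> z2 < b.1.1 <= x.
  by move=> b /hB [_ [/= /andP[h1 h2] _]]; rewrite h1 h2.
have nUL : ~ UL [::] A B by move=> [b [_ [[a0 []]]]].
have [A1 [A2 [B1 [B2 [eA eB hA1 hA2 [hr1 hr2]]]]]] :=
  @cross_rec z2 x B h2x sB hBb A [::] sA isT nUL.
move: sA sB; rewrite eA eB !pairwise_cat => /and3P[_ pA1 pA2] /and3P[_ pB1 pB2].
exists (A1 ++ B2), (B1 ++ A2); split.
- split; first by rewrite sorted_pairwise ?pairwise_cat ?hr1 ?pA1 ?pB2 //; exact: incr_trans.
  move=> u; rewrite mem_cat => /orP[uA1|uB2].
    have /hA [Xu [/= /andP[k1 k2] k3]] : u \in A by rewrite eA mem_cat uA1.
    by split => //; split => //=; rewrite k1 (allP hA1 _ uA1).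
  have /hB [Xu [/= /andP[k1 k2] k3]] : u \in B by rewrite eB mem_cat uB2 orbT.
  by split => //; split => //=; rewrite (le_lt_trans h12 k1) k2.
- split; first by rewrite sorted_pairwise ?pairwise_cat ?hr2 ?pA2 ?pB1 //; exact: incr_trans.
  move=> u; rewrite mem_cat => /orP[uB1|uA2].
    have /hB [Xu [/= /andP[k1 k2] k3]] : u \in B by rewrite eB mem_cat uB1.
    by split => //; split => //=; rewrite k1 (le_trans k2 hxy).
  have /hA [Xu [/= /andP[k1 k2] k3]] : u \in A by rewrite eA mem_cat uA2 orbT.
  by split => //; split => //=; rewrite (allP hA2 _ uA2) k2.
- rewrite /wsum !big_cat /=; lra.
Qed.

End Comb.



Section Sup.
Variable R : realType.
Notation P := (mpoint R).

Definition issup (S : set R) (A : \bar R) :=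
  (forall a, S a -> (a%:E <= A)%E) /\ (forall M, (forall a, S a -> (a%:E <= M)%E) -> (A <= M)%E).

Lemma issup_addr S A K M : issup S A -> (exists a, S a) -> K != -oo%E ->
  (forall a, S a -> (a%:E + K <= M)%E) -> (A + K <= M)%E.
Proof.
move=> [hge hle] [a0 Sa0]; case: K => [k| |//] _ h.
- rewrite -leeBrDr //; apply: hle => a Sa; rewrite leeBrDr //; exact: h.
- have := h _ Sa0; rewrite /= addey // leye_eq => /eqP ->; exact: leey.
Qed.

Lemma issup_ninfty S A : issup S A -> (exists a, S a) -> A != -oo%E.
Proof.
move=> [hge _] [a Sa]; apply/negP => /eqP eA; move: (hge _ Sa); rewrite eA.
by rewrite leeNy_eq.
Qed.

Definition Lset (X : set P) (nu : set R -> \bar R) (x t : R) : set R :=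
  [set r | exists z C, [/\ z <= x, okC X z x t C & r = fine (nuF nu z) + wsum C]].

Lemma Lset_ne X nu x t : exists a, Lset X nu x t a.
Proof.
exists (fine (nuF nu x) + wsum [::]), x, [::]; split => //; split => //.
Qed.

Lemma Lnu_issup X nu x t : (forall z, nuF nu z \is a fin_num) ->
  issup (Lset X nu x t) (Lnu X nu x t).
Proof.
move=> fin; split.
- move=> a [z [C [zx hC ->]]]; rewrite EFinD fineK //.
  apply: (@le_trans _ _ (nuF nu z + LPP X (z, 0%R) (x, t))%E).
    apply: leeD2l; apply: ereal_sup_ubound; exists C => //.
  by apply: ereal_sup_ubound; exists z.
- move=> M hM; apply: ge_ereal_sup => _ [z zx <-].
  rewrite -leeBrDl //; apply: ge_ereal_sup => _ [C hC <-].
  rewrite leeBrDl // -(fineK (fin z)) -EFinD; apply: hM.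
  by exists z, C; split.
Qed.

End Sup.


Section Det.
Variable R : realType.
Notation P := (mpoint R).
Variable X : set P.

Lemma okC_mono z x t x' t' C : x <= x' -> t <= t' -> okC X z x t C -> okC X z x' t' C.
Proof.
move=> hx ht [sC hC]; split => // u /hC [Xu [/andP[k1 k2] /andP[k3 k4]]]; split => //.
by split; apply/andP; split => //=; [exact: le_trans k2 hx | exact: le_trans k4 ht].
Qed.

Lemma Lnu_mono nu x t x' t' : (forall z, nuF nu z \is a fin_num) -> x <= x' -> t <= t' ->
  (Lnu X nu x t <= Lnu X nu x' t')%E.
Proof.
move=> fin hx ht; apply: (proj2 (Lnu_issup X x t fin)) => a [z [C [zx hC ->]]].
apply: (proj1 (Lnu_issup X x' t' fin)); exists z, C; split => //.
- exact: le_trans zx hx.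
- exact: okC_mono hC.
Qed.

Variables nu nubar : set R -> \bar R.
Hypothesis fin_nu : forall z, nuF nu z \is a fin_num.
Hypothesis fin_nubar : forall z, nuF nubar z \is a fin_num.
Hypothesis diff : forall a b, a <= b ->
  fine (nuF nu b) + fine (nuF nubar a) <= fine (nuF nu a) + fine (nuF nubar b).

Lemma Lcmp x t : (Lnu X nubar x t + nuF nu x <= Lnu X nu x t + nuF nubar x)%E.
Proof.
apply: issup_addr; [exact: Lnu_issup | exact: Lset_ne | by move: (fin_nu x); rewrite fin_numE => /andP[] |].
move=> _ [z [C [zx hC ->]]].
rewrite -(fineK (fin_nu x)) -(fineK (fin_nubar x)) -EFinD.
apply: (@le_trans _ _ ((fine (nuF nu z) + wsum C)%:E + (fine (nuF nubar x))%:E)%E).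
  rewrite -EFinD lee_fin; have := diff zx; lra.
apply: leeD2r; apply: (proj1 (Lnu_issup X x t fin_nu)); by exists z, C.
Qed.

Lemma Ldet1 x y t : x <= y ->
  (Lnu X nu y t + Lnu X nubar x t <= Lnu X nu x t + Lnu X nubar y t)%E.
Proof.
move=> xy.
have ge1 := proj1 (Lnu_issup X x t fin_nu).
have ge2 := proj1 (Lnu_issup X y t fin_nubar).
apply: issup_addr; [exact: Lnu_issup | exact: Lset_ne | exact: (issup_ninfty (Lnu_issup X x t fin_nubar) (Lset_ne X nubar x t)) |].
move=> _ [z1 [C1 [z1y hC1 ->]]]; rewrite addeC.
apply: issup_addr; [exact: Lnu_issup | exact: Lset_ne | by [] |].
move=> _ [z2 [C2 [z2x hC2 ->]]]; rewrite -EFinD.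
have [z21|z12] := leP z2 z1.
- apply: (@le_trans _ _ ((fine (nuF nu z2) + wsum C2)%:E + (fine (nuF nubar z1) + wsum C1)%:E)%E).
    rewrite -EFinD lee_fin; have := diff z21; lra.
  apply: leeD; [apply: ge1 | apply: ge2].
    by exists z2, C2.
  by exists z1, C1.
- have [A' [B' [hA' hB' hw]]] := cross_box (ltW z12) z2x xy hC1 hC2.
  apply: (@le_trans _ _ ((fine (nuF nu z1) + wsum A')%:E + (fine (nuF nubar z2) + wsum B')%:E)%E).
    rewrite -EFinD lee_fin; lra.
  apply: leeD; [apply: ge1 | apply: ge2].
    by exists z1, A'; split => //; exact: le_trans (ltW z12) z2x.
  by exists z2, B'; split => //; exact: le_trans z2x xy.
Qed.


Lemma exists_max (z0 : R) (l : seq R) :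
  exists m, [/\ z0 <= m, (forall r, r \in l -> r <= m) & (m = z0 \/ m \in l)].
Proof.
elim: l => [|r l [m [h1 h2 h3]]]; first by exists z0; split => //; left.
have [rm|mr] := leP r m.
- exists m; split => //.
    by move=> r'; rewrite inE => /orP[/eqP->//|]; exact: h2.
  by case: h3 => [->|ml]; [left | right; rewrite inE ml orbT].
- exists r; split.
  + exact: le_trans h1 (ltW mr).
  + move=> r'; rewrite inE => /orP[/eqP->//|/h2 hr]; exact: le_trans hr (ltW mr).
  + by right; rewrite inE eqxx.
Qed.

Lemma Ldet2 x s t : s <= t ->
  (Lnu X nubar x t + Lnu X nu x s <= Lnu X nu x t + Lnu X nubar x s)%E.
Proof.
move=> st.
apply: issup_addr; [exact: Lnu_issup | exact: Lset_ne |
  exact: (issup_ninfty (Lnu_issup X x s fin_nu) (Lset_ne X nu x s)) |].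
move=> _ [z0 [C [z0x [sC hC] ->]]].
have pC : pairwise (@incr R) C by rewrite -sorted_pairwise //; exact: incr_trans.
pose p := fun u : P => u.1.2 <= s.
have eC : C = seq.filter p C ++ seq.filter (predC p) C.
  apply: split_filter => // u v /andP[_ uv] pv; exact: le_trans (ltW uv) pv.
set C1 := seq.filter p C; set C2 := seq.filter (predC p) C.
have := pC; rewrite eC pairwise_cat => /and3P[r12 pC1 pC2].
have memC1 u : u \in C1 -> u \in C /\ u.1.2 <= s by rewrite mem_filter => /andP[].
have memC2 u : u \in C2 -> u \in C /\ s < u.1.2.
  by rewrite mem_filter /= /p -ltNge => /andP[].
have [m [z0m hm mC]] := exists_max z0 [seq u.1.1 | u <- C1].
have mx : m <= x.
  case: mC => [->//|/mapP [u /memC1 [/hC [_ [/andP[_ k] _]] _] ->]] //.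
have hC2m v : v \in C2 -> m < v.1.1.
  move=> vC2; case: mC => [->|/mapP [u uC1 ->]].
    by have [/hC [_ [/andP[k _] _]] _] := memC2 _ vC2.
  by have /andP[] := allrelP r12 _ _ uC1 vC2.
have okC1 : okC X z0 m s C1.
  split; first by rewrite sorted_pairwise //; exact: incr_trans.
  move=> u uC1; have [/hC [Xu [/andP[k1 _] /andP[k3 _]]] k5] := memC1 _ uC1.
  split => //; split; apply/andP; split => //.
  by apply: hm; apply/mapP; exists u.
have L1 : ((fine (nuF nubar z0) + wsum C1)%:E <= Lnu X nubar m s)%E.
  by apply: (proj1 (Lnu_issup X m s fin_nubar)); exists z0, C1.
have L2 : (Lnu X nu m s + (wsum C2)%:E <= Lnu X nu x t)%E.
  apply: issup_addr; [exact: Lnu_issup | exact: Lset_ne | by [] |].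
  move=> _ [w [C' [wm [sC' hC'] ->]]]; rewrite -EFinD.
  apply: (proj1 (Lnu_issup X x t fin_nu)); exists w, (C' ++ C2); split.
  - exact: le_trans wm mx.
  - split.
      rewrite sorted_pairwise; last exact: incr_trans.
      rewrite pairwise_cat pC2 -sorted_pairwise ?sC' ?andbT; last exact: incr_trans.
      apply/allrelP => u v uC' vC2; have [_ [/andP[_ k1] /andP[_ k2]]] := hC' _ uC'.
      have [_ k3] := memC2 _ vC2.
      by apply/andP; split; [exact: le_lt_trans k1 (hC2m _ vC2) | exact: le_lt_trans k2 k3].
    move=> u; rewrite mem_cat => /orP[uC'|uC2].
      have [Xu [/andP[k1 k2] /andP[k3 k4]]] := hC' _ uC'.
      split => //; split; apply/andP; split => //.
        exact: le_trans k2 mx.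
      exact: le_trans k4 st.
    have [/hC [Xu [/andP[k1 k2] /andP[k3 k4]]] _] := memC2 _ uC2.
    split => //; split; apply/andP; split => //.
    exact: le_lt_trans wm (hC2m _ uC2).
  - by rewrite /wsum big_cat addrA.
have D := @Ldet1 m x s mx.
have -> : wsum (seq.filter p C ++ seq.filter (predC p) C) = wsum C1 + wsum C2 by rewrite /wsum big_cat.
rewrite addrA EFinD.
apply: (@le_trans _ _ ((Lnu X nubar m s + (wsum C2)%:E) + Lnu X nu x s)%E).
  by apply: leeD2r; apply: leeD2r.
rewrite addeAC (addeC (Lnu X nubar m s)).
apply: (@le_trans _ _ ((Lnu X nu m s + Lnu X nubar x s) + (wsum C2)%:E)%E).
  exact: leeD2r.
by rewrite addeAC; apply: leeD2r.
Qed.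

End Det.



Section Meas.
Variable R : realType.
Variable nu : {measure set R -> \bar R}.
Hypothesis hfin : forall a b : R, (nu `[a, b]%classic < +oo)%E.

Lemma fin_sub (A : set R) a b : measurable A -> A `<=` `[a, b]%classic -> nu A \is a fin_num.
Proof.
move=> mA sub; rewrite ge0_fin_numE ?measure_ge0 //.
apply: le_lt_trans (hfin a b).
by apply: le_measure => //; rewrite inE //; exact: measurable_itv.
Qed.

Lemma fin_oc a b : nu `]a, b]%classic \is a fin_num.
Proof.
apply: (@fin_sub _ a b); first exact: measurable_itv.
by move=> u /=; rewrite !in_itv /= => /andP[h1 h2]; rewrite (ltW h1) h2.
Qed.

Lemma fin_nuF z : nuF nu z \is a fin_num.
Proof. by rewrite /nuF; case: ifP => _; rewrite ?fin_numN fin_oc. Qed.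

Lemma split_oc a m b : a <= m -> m <= b -> nu `]a, b]%classic = (nu `]a, m]%classic + nu `]m, b]%classic)%E.
Proof.
move=> am mb.
rewrite (@itv_bndbnd_setU _ _ (BRight a) (BRight m) (BRight b)) ?bnd_simp //.
apply: measureU; try exact: measurable_itv.
apply/seteqP; split => u //=; rewrite !in_itv /= => -[/andP[_ h1] /andP[h2 _]].
by move: (le_lt_trans h1 h2); rewrite ltxx.
Qed.

Lemma nuF_diff a b : a <= b -> fine (nuF nu b) - fine (nuF nu a) = fine (nu `]a, b]%classic).
Proof.
move=> ab; rewrite /nuF; case: ifPn => hb; case: ifPn => ha.
- rewrite (split_oc ha ab) fineD ?fin_oc //; lra.
- rewrite -ltNge in ha; rewrite (split_oc (ltW ha) hb) fineN fineD ?fin_oc //; lra.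
- by exfalso; move: hb; rewrite (le_trans ha ab).
- rewrite -ltNge in ha; rewrite -ltNge in hb; rewrite (split_oc ab (ltW hb)) !fineN fineD ?fin_oc //; lra.
Qed.

End Meas.

Lemma diff_lemma (R : realType) (nu nubar : {measure set R -> \bar R}) :
  (forall a b : R, (nu `[a, b]%classic < +oo)%E) ->
  (forall a b : R, (nubar `[a, b]%classic < +oo)%E) ->
  (forall I : set R, measurable I -> (nu I <= nubar I)%E) ->
  forall a b, a <= b ->
  fine (nuF nu b) + fine (nuF nubar a) <= fine (nuF nu a) + fine (nuF nubar b).
Proof.
move=> h1 h2 hle a b ab.
have e1 := nuF_diff h1 ab; have e2 := nuF_diff h2 ab.
have : fine (nu `]a, b]%classic) <= fine (nubar `]a, b]%classic).
  by apply: fine_le; [exact: fin_oc | exact: fin_oc | apply: hle; exact: measurable_itv].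
lra.
Qed.

Section ArithSec.
Local Open Scope ereal_scope.

Lemma part1_arith (R : realType) (a b c d : \bar R) (p q : R) :
  a != -oo -> c != -oo -> a <= b -> b + c <= a + d ->
  c + p%:E <= a + q%:E -> b - a <= d - c.
Proof.
move=> na nc ab h1 h2.
case: a na ab h1 h2 => [a| |] //; move=> _ ab h1 h2; first last.
  by move: ab; rewrite leye_eq => /eqP ->; exact: leNye.
case: c nc h1 h2 => [c| |] // _ h1 h2.
case: b ab h1 => [b| |] // _ h1.
- case: d h1 => [d| |] // h1; first by rewrite -!EFinB lee_fin; rewrite -!EFinD lee_fin in h1; lra.
  by rewrite leey.
- by case: d h1.
Qed.

Lemma part2_arith (R : realType) (Lt Lbt St Sbt Ls Lbs Ss Sbs : \bar R) (c p q : R) :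
  Ls != -oo -> Lbs != -oo -> Ss != -oo ->
  St <= Lt -> Sbt <= Lbt -> Ss <= St -> Ls <= Lt -> Lbs <= Lbt ->
  Sbt + c%:E = St -> Sbs + c%:E = Ss ->
  Lbt + Ls <= Lt + Lbs -> Lbt + p%:E <= Lt + q%:E ->
  (Lbt - Sbt) - (Lt - St) <= (Lbs - Sbs) - (Ls - Ss).
Proof.
move=> nLs nLbs nSs h1 h2 h3 h4 h5 e1 e2 h6 h7.
case: St h1 h3 e1 => [St| |] h1 h3 e1; last first.
- by move: h3; rewrite leeNy_eq => /eqP e; rewrite e in nSs.
- have eS : Sbt = +oo by case: Sbt e1 h2.
  rewrite eS in h2; move: h1 h2; rewrite !leye_eq => /eqP -> /eqP ->.
  by rewrite eS; exact: leNye.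
case: Lt h1 h4 h6 h7 => [Lt| |] h1 h4 h6 h7; last 2 first.
- by rewrite addeNy; exact: leNye.
- by move: h1.
case: Lbt h2 h5 h6 h7 => [Lbt| |] h2 h5 h6 h7; last 2 first.
- by move: h7.
- by rewrite !addNye; exact: leNye.
case: Sbt h2 e1 => [Sbt| |] h2 e1 //.
case: Ls nLs h4 h6 => [Ls| |] // _ h4 h6.
case: Lbs nLbs h5 h6 => [Lbs| |] // _ h5 h6.
case: Ss nSs h3 e2 => [Ss| |] // _ h3 e2.
case: Sbs e2 => [Sbs| |] // e2.
rewrite -!EFinB lee_fin.
move: e1 e2 h6; rewrite -!EFinD => -[e1] [e2]; rewrite lee_fin => h6; lra.
Qed.

End ArithSec.

Lemma shift0 (R : realType) (nu nubar : {measure set R -> \bar R}) :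
  (forall a b : R, (nu `[a, b]%classic < +oo)%E) ->
  (forall a b : R, (nubar `[a, b]%classic < +oo)%E) ->
  (forall I : set R, measurable I -> I `<=` `]-oo, 0[%classic -> nu I = nubar I) ->
  forall z, z < 0 ->
  fine (nuF nubar z) + (fine (nubar [set 0]) - fine (nu [set 0])) = fine (nuF nu z).
Proof.
move=> h1 h2 hco z z0.
have sp (mu : {measure set R -> \bar R}) : (forall a b : R, (mu `[a, b]%classic < +oo)%E) ->
    fine (nuF mu z) = - fine (mu `]z, 0[%classic) - fine (mu [set 0]).
  move=> hf; rewrite /nuF; case: ifPn => [hz|_]; first by move: (lt_le_trans z0 hz); rewrite ltxx.
  rewrite -(@setUitv1 _ _ (BRight z) 0 true) ?bnd_simp //.
  rewrite measureU; first last.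
  - apply/seteqP; split => u //= []; rewrite in_itv /= => /andP[_ k] ek; move: k; by rewrite ek ltxx.
  - exact: measurable_set1.
  - exact: measurable_itv.
  rewrite fineN fineD; first lra.
  - apply: (@fin_sub _ _ hf _ z 0); first exact: measurable_itv.
    by move=> u /=; rewrite !in_itv /= => /andP[k1 k2]; rewrite (ltW k1) (ltW k2).
  - apply: (@fin_sub _ _ hf _ z 0); first exact: measurable_set1.
    by move=> u /= ->; rewrite in_itv /= (ltW z0) lexx.
rewrite (sp _ h1) (sp _ h2) (hco `]z, 0[%classic); first lra.
- exact: measurable_itv.
- by move=> u /=; rewrite !in_itv /= => /andP[].
Qed.

Section Final.
Variable R : realType.
Variable X : set (mpoint R).

Definition Sup0 (mu : set R -> \bar R) (t : R) :=
  ereal_sup [set Lnu X mu y t | y in [set y : R | y < 0]].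

Lemma Lninf mu (fm : forall z, nuF mu z \is a fin_num) x t : Lnu X mu x t != -oo%E.
Proof. exact: (issup_ninfty (Lnu_issup X x t fm) (Lset_ne X mu x t)). Qed.

Lemma S_le_L mu (fm : forall z, nuF mu z \is a fin_num) x t : 0 <= x ->
  (Sup0 mu t <= Lnu X mu x t)%E.
Proof.
move=> x0; apply: ge_ereal_sup => _ [y y0 <-]; apply: Lnu_mono => //.
exact: le_trans (ltW y0) x0.
Qed.

Lemma S_mono mu (fm : forall z, nuF mu z \is a fin_num) s t : s <= t ->
  (Sup0 mu s <= Sup0 mu t)%E.
Proof.
move=> st; apply: ge_ereal_sup => _ [y y0 <-].
apply: le_trans (Lnu_mono X fm (lexx y) st) _.
by apply: ereal_sup_ubound; exists y.
Qed.

Lemma S_ninf mu (fm : forall z, nuF mu z \is a fin_num) t : Sup0 mu t != -oo%E.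
Proof.
apply/negP => /eqP e.
have : (Lnu X mu (-1) t <= Sup0 mu t)%E.
  by apply: ereal_sup_ubound; exists (-1) => //=; rewrite ltrN10.
rewrite e leeNy_eq; apply/negP; exact: Lninf.
Qed.

Variables nu nubar : set R -> \bar R.
Hypothesis fn : forall z, nuF nu z \is a fin_num.
Hypothesis fnb : forall z, nuF nubar z \is a fin_num.
Variable c : R.
Hypothesis hc : forall z, z < 0 -> fine (nuF nubar z) + c = fine (nuF nu z).

Lemma Lshift y t : y < 0 -> (Lnu X nubar y t + c%:E = Lnu X nu y t)%E.
Proof.
move=> y0; apply/eqP; rewrite eq_le; apply/andP; split.
- apply: issup_addr; [exact: Lnu_issup | exact: Lset_ne | by [] |].
  move=> _ [z [C [zy hC ->]]]; rewrite -EFinD.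
  apply: (proj1 (Lnu_issup X y t fn)); exists z, C; split => //.
  rewrite -hc; first lra.
  exact: le_lt_trans zy y0.
- apply: (proj2 (Lnu_issup X y t fn)) => _ [z [C [zy hC ->]]].
  rewrite -leeBlDr // -EFinB.
  apply: (proj1 (Lnu_issup X y t fnb)); exists z, C; split => //.
  rewrite -hc; first lra.
  exact: le_lt_trans zy y0.
Qed.

Lemma Sshift t : (Sup0 nubar t + c%:E = Sup0 nu t)%E.
Proof.
apply/eqP; rewrite eq_le; apply/andP; split.
- rewrite -leeBrDr //; apply: ge_ereal_sup => _ [y y0 <-].
  rewrite leeBrDr // Lshift //; apply: ereal_sup_ubound; by exists y.
- apply: ge_ereal_sup => _ [y y0 <-]; rewrite -Lshift //.
  apply: leeD2r; apply: ereal_sup_ubound; by exists y.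
Qed.

End Final.


Unset Implicit Arguments. Set Strict Implicit.

Theorem proposition3p9 (R : realType) (d : measure_display) (Omega : measurableType d)
  (P : probability Omega R) (F : probability R R) (Xi : Omega -> set (mpoint R))
  (nu nubar : {measure set R -> \bar R}) :
  weight_law F ->
  poisson_process P (intensity F) Xi ->
  in_calN nu -> in_calN nubar ->
  (forall I : set R, measurable I -> (nu I <= nubar I)%E) ->
  {ae P, forall w, forall t : R, 0 <= t -> forall x y : R, x <= y ->
      (Mnu (Xi w) nu t x y <= Mnu (Xi w) nubar t x y)%E}
  /\
  ((forall I : set R, measurable I -> I `<=` `]-oo, 0[%classic -> nu I = nubar I) ->
   {ae P, forall w, forall x : R, 0 <= x -> forall s t : R, 0 <= s -> s <= t ->
      (Mnu_closed (Xi w) nubar t 0 x - Mnu_closed (Xi w) nu t 0 x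
        <= Mnu_closed (Xi w) nubar s 0 x - Mnu_closed (Xi w) nu s 0 x)%E}).
Proof.
move=> _ _ [h1 _] [h2 _] hle.
have fn : forall z, nuF nu z \is a fin_num by move=> z; exact: fin_nuF.
have fnb : forall z, nuF nubar z \is a fin_num by move=> z; exact: fin_nuF.
have df := diff_lemma h1 h2 hle.
split.
- apply: aeW => w t _ x y xy; rewrite /Mnu.
  apply: (@part1_arith _ _ _ _ _ (fine (nuF nu x)) (fine (nuF nubar x))).
  + exact: Lninf.
  + exact: Lninf.
  + exact: Lnu_mono.
  + exact: (Ldet1 (Xi w) fn fnb df t xy).
  + rewrite !fineK //; exact: Lcmp.
- move=> hco; apply: aeW => w x x0 s t s0 st; rewrite /Mnu_closed.
  have hc := shift0 h1 h2 hco.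
  apply: (@part2_arith _ _ _ (Sup0 (Xi w) nu t) (Sup0 (Xi w) nubar t) _ _
     (Sup0 (Xi w) nu s) (Sup0 (Xi w) nubar s)
     (fine (nubar [set 0]) - fine (nu [set 0])) (fine (nuF nu x)) (fine (nuF nubar x))).
  + exact: Lninf.
  + exact: Lninf.
  + exact: S_ninf.
  + exact: S_le_L.
  + exact: S_le_L.
  + exact: S_mono.
  + exact: Lnu_mono.
  + exact: Lnu_mono.
  + exact: Sshift.
  + exact: Sshift.
  + exact: (Ldet2 (Xi w) fn fnb df x st).
  + rewrite !fineK //; exact: Lcmp.
Qed.
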